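(* Let $W$ be a subcomplex of a simplicial complex $K$ on $[m]$, and let $\mathcal I_{K\setminus W}$ be the kernel of the natural quotient map $\mathbb Z[K]\to\mathbb Z[W]$. Then the annihilator $(0:_{\mathbb Z[K]}\mathcal I_{K\setminus W})$ is the ideal generated by the monomials $x_\sigma$ with $\sigma\in W\setminus\overline{K\setminus W}$.
   Context: $\mathbb Z[K]=\mathbb Z[x_1,\dots,x_m]/\langle x_\sigma:\sigma\notin K\rangle$ is the Stanley–Reisner ring, $x_\sigma=\prod_{i\in\sigma}x_i$. For a subset $Y$ of a simplicial complex, $\overline Y$ denotes the smallest subcomplex containing $Y$ (all subsets of members of $Y$). *)

(* Defs.v *)
From HB Require Import structures.
From mathcomp Require Import all_boot all_order all_algebra.
From mathcomp Require Import mpoly.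
Set Implicit Arguments. Unset Strict Implicit. Unset Printing Implicit Defensive.
Import GRing.Theory.
Local Open Scope ring_scope.

Definition is_complex (m : nat) (K : {set {set 'I_m}}) : Prop :=
  forall s t : {set 'I_m}, s \in K -> t \subset s -> t \in K.

Definition cl (m : nat) (Y : {set {set 'I_m}}) : {set {set 'I_m}} :=
  [set t : {set 'I_m} | [exists s in Y, t \subset s]].

Definition xmon (m : nat) (s : {set 'I_m}) : {mpoly int[m]} :=
  \prod_(i in s) 'X_i.

Definition in_ideal (R : comPzRingType) (S : seq R) (f : R) : Prop :=
  exists cs : seq R, f = \sum_(i < size S) cs`_i * S`_i.

Definition mons (m : nat) (A : {set {set 'I_m}}) : seq {mpoly int[m]} :=
  [seq xmon s | s <- enum A].

Definition SR_ideal (m : nat) (K : {set {set 'I_m}}) (f : {mpoly int[m]}) : Prop :=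
  in_ideal (mons (~: K)) f.

(* Elements of Z[K] are represented by polynomials f (class [f]);
   [f] = [g] in Z[K] iff f - g \in I_K. *)
Definition SR_eq (m : nat) (K : {set {set 'I_m}}) (f g : {mpoly int[m]}) : Prop :=
  SR_ideal K (f - g).

(* [f]_K lies in I_{K\W} = ker (Z[K] -> Z[W], [f]_K |-> [f]_W)
   iff [f]_W = 0 in Z[W]. *)
Definition in_ker_restr (m : nat) (K W : {set {set 'I_m}}) (f : {mpoly int[m]}) : Prop :=
  SR_eq W f 0.

Definition in_annihilator (m : nat) (K W : {set {set 'I_m}}) (f : {mpoly int[m]}) : Prop :=
  forall g : {mpoly int[m]}, in_ker_restr K W g -> SR_eq K (f * g) 0.

Definition in_SR_ideal_gen (m : nat) (K A : {set {set 'I_m}}) (f : {mpoly int[m]}) : Prop :=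
  exists cs : seq {mpoly int[m]},
    SR_eq K f (\sum_(i < size (mons A)) cs`_i * (mons A)`_i).

(* Main.v *)
Require Import Defs.
From HB Require Import structures.
From mathcomp Require Import all_boot all_order all_algebra.
From mathcomp Require Import mpoly.
Import GRing.Theory.
Local Open Scope ring_scope.

Section Ideal.
Variable R : comPzRingType.
Variable S : seq R.

Lemma ideal0 : in_ideal S 0.
Proof. exists [::]; rewrite big1 // => i _; by rewrite nth_nil mul0r. Qed.

Lemma idealD f g : in_ideal S f -> in_ideal S g -> in_ideal S (f + g).
Proof.
case=> cs -> [ds ->]; exists (mkseq (fun i => cs`_i + ds`_i) (size S)).
rewrite -big_split /=; apply: eq_bigr => i _.
by rewrite nth_mkseq // mulrDl.
Qed.

Lemma idealM f g : in_ideal S f -> in_ideal S (g * f).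
Proof.
case=> cs ->; exists (mkseq (fun i => g * cs`_i) (size S)).
rewrite mulr_sumr; apply: eq_bigr => i _.
by rewrite nth_mkseq // mulrA.
Qed.

Lemma idealN f : in_ideal S f -> in_ideal S (- f).
Proof. by move=> h; rewrite -mulN1r; apply: idealM. Qed.

Lemma idealB f g : in_ideal S f -> in_ideal S g -> in_ideal S (f - g).
Proof. by move=> hf hg; apply: idealD => //; apply: idealN. Qed.

Lemma idealS j : (j < size S)%N -> in_ideal S S`_j.
Proof.
move=> hj; exists (mkseq (fun i => ((i == j)%:R : R)) (size S)).
rewrite (bigD1 (Ordinal hj)) //= big1 ?addr0.
  by rewrite nth_mkseq // eqxx mul1r.
move=> i /eqP hi; rewrite nth_mkseq //.
have -> : (val i == j) = false by apply/negbTE/eqP => e; apply: hi; apply: val_inj.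
by rewrite mul0r.
Qed.

Lemma ideal_sum (I : Type) (r : seq I) (P : pred I) F :
  (forall i, P i -> in_ideal S (F i)) -> in_ideal S (\sum_(i <- r | P i) F i).
Proof.
move=> h; apply: (big_ind (in_ideal S)) => //; [exact: ideal0 | exact: idealD].
Qed.
End Ideal.
Section Mon.
Variable m : nat.
Implicit Types (a b : 'X_{1..m}) (s : {set 'I_m}) (p q : {mpoly int[m]}).

Definition supp a : {set 'I_m} := [set i | a i != 0%N].
Definition mset s : 'X_{1..m} := \big[+%MM/0%MM]_(i in s) U_(i)%MM.


Lemma msetE s i : mset s i = (i \in s).
Proof.
rewrite /mset mnm_sumE.
case: (boolP (i \in s)) => hi.
  rewrite (bigD1 i) //= big1 ?addn0 ?mnm1E ?eqxx // => j /andP [_ hj].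
  by rewrite mnm1E (negbTE hj).
rewrite big1 // => j hj; rewrite mnm1E; by case: eqP => // e; rewrite -e hj in hi.
Qed.

Lemma xmonE s : xmon s = 'X_[mset s].
Proof.
rewrite /xmon /mset.
by rewrite (big_morph (fun a => 'X_[a] : {mpoly int[m]}) (@mpolyXD _ _) (@mpolyX0 _ _)).
Qed.

Lemma supp_mset s : supp (mset s) = s.
Proof. by apply/setP => i; rewrite inE msetE; case: (i \in s). Qed.

Lemma suppD a b : supp (a + b)%MM = supp a :|: supp b.
Proof. by apply/setP => i; rewrite !inE mnmDE addn_eq0 negb_and. Qed.

Lemma mon_split a : a = (a - mset (supp a) + mset (supp a))%MM.
Proof.
rewrite submK //; apply/mnm_lepP => i; rewrite msetE inE.
by case: (a i).
Qed.

Lemma mons_nth (A : {set {set 'I_m}}) j : (j < size (mons A))%N ->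
  (mons A)`_j = xmon (nth set0 (enum A) j) /\ nth set0 (enum A) j \in A.
Proof.
rewrite /mons size_map => hj; rewrite (nth_map set0) //; split => //.
by rewrite -mem_enum mem_nth.
Qed.

Lemma xmon_mem (A : {set {set 'I_m}}) s : s \in A -> in_ideal (mons A) (xmon s).
Proof.
move=> hs; have hi : (index s (enum A) < size (mons A))%N.
  by rewrite /mons size_map index_mem mem_enum.
have := @idealS _ (mons A) _ hi; rewrite /mons (nth_map set0) ?nth_index ?mem_enum //.
by rewrite -(size_map (@xmon m)).
Qed.

Lemma G (A : {set {set 'I_m}}) (r : seq 'X_{1..m}) (c : 'X_{1..m} -> int) :
  (forall a, a \in r -> supp a \in A) ->
  in_ideal (mons A) (\sum_(a <- r) c a *: 'X_[a]).
Proof.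
move=> h; rewrite big_seq; apply: ideal_sum => a /h ha.
rewrite [in 'X_[a]](mon_split a) mpolyXD scalerAl -xmonE.
apply: idealM; exact: xmon_mem.
Qed.

Lemma C2 (A : {set {set 'I_m}}) p :
  (forall a, a \in msupp p -> supp a \in A) -> in_ideal (mons A) p.
Proof. by move=> h; rewrite (mpolyE p); apply: G. Qed.

Definition PK (K : {set {set 'I_m}}) p := forall a, a \in msupp p -> supp a \notin K.

Lemma PK0 (K : {set {set 'I_m}}) : PK K 0.
Proof. by move=> a; rewrite msupp0. Qed.

Lemma PKD (K : {set {set 'I_m}}) p q : PK K p -> PK K q -> PK K (p + q).
Proof.
move=> hp hq a; rewrite mcoeff_msupp mcoeffD => ha.
case: (boolP (a \in msupp p)) => [/hp //|]; rewrite mcoeff_msupp negbK => /eqP e.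
by apply: hq; rewrite mcoeff_msupp; rewrite e add0r in ha.
Qed.

Lemma PKM (K : {set {set 'I_m}}) p q :
  (forall a1 a2, a1 \in msupp p -> a2 \in msupp q -> supp (a1 + a2)%MM \notin K) ->
  PK K (p * q).
Proof.
move=> h a /msuppM_le /allpairsP [[a1 a2] /= [h1 h2 ->]]; exact: h.
Qed.

Lemma C1 (K : {set {set 'I_m}}) p : is_complex K -> SR_ideal K p -> PK K p.
Proof.
move=> hK [cs ->]; apply: (big_ind (PK K)); [exact: PK0 | exact: PKD |].
move=> i _; have [-> hA] := @mons_nth (~: K) i (ltn_ord i).
rewrite xmonE; apply: PKM => a1 a2 _; rewrite msuppX mem_seq1 => /eqP ->.
rewrite suppD supp_mset; rewrite inE in hA; apply: contra hA => hU.
exact: hK _ _ hU (subsetUr _ _).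
Qed.

Lemma main (K W : {set {set 'I_m}}) :
  is_complex K -> is_complex W -> W \subset K ->
  forall f : {mpoly int[m]},
    in_annihilator K W f <-> in_SR_ideal_gen K (W :\: cl (K :\: W)) f.
Proof.
move=> hK hW hWK f; split.
- move=> hann.
  have step1 : forall a, a \in msupp f -> supp a \in K -> supp a \in W :\: cl (K :\: W).
    move=> a ha haK.
    have key : forall t, t \in K :\: W -> supp (a + mset t)%MM \notin K.
      move=> t ht.
      have hk : in_ker_restr K W (xmon t).
        rewrite /in_ker_restr /SR_eq /SR_ideal subr0; apply: xmon_mem.
        by move: ht; rewrite !inE => /andP [].
      have := @C1 K _ hK (hann _ hk); rewrite subr0 xmonE => H; apply: H.
      by rewrite mcoeff_msupp addmC mcoeffMX -mcoeff_msupp.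
    rewrite !inE; apply/andP; split.
      apply/negP => /existsP [t /andP [ht hsub]].
      move: (key t ht); rewrite suppD supp_mset (setUidPr hsub).
      by move: ht; rewrite !inE => /andP [_ ->].
    apply/idPn => hnW.
    have := key (supp a); rewrite suppD supp_mset setUid haK !inE hnW haK.
    by move/(_ isT).
  set fK := \sum_(a <- msupp f | supp a \in K) f@_a *: 'X_[a].
  have hfK : in_ideal (mons (W :\: cl (K :\: W))) fK.
    rewrite /fK -big_filter; apply: G => a; rewrite mem_filter => /andP [h1 h2].
    exact: step1.
  case: hfK => cs e; exists cs; rewrite -e /SR_eq /SR_ideal.
  have -> : f - fK = \sum_(a <- msupp f | supp a \notin K) f@_a *: 'X_[a].
    by rewrite {1}(mpolyE f) (bigID (fun a => supp a \in K)) /= /fK addrC addrK.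
  rewrite -big_filter; apply: G => a; rewrite mem_filter => /andP [h1 _].
  by rewrite inE.
- case=> cs hfh g hg.
  rewrite /SR_eq /SR_ideal subr0.
  set h := \sum_(i < _) _ in hfh.
  have -> : f * g = g * (f - h) + h * g by rewrite mulrBr [h * g]mulrC subrK mulrC.
  apply: idealD; first exact: idealM.
  rewrite /h mulr_suml; apply: ideal_sum => i _.
  rewrite -mulrA; apply: idealM.
  have [-> hA] := @mons_nth (W :\: cl (K :\: W)) i (ltn_ord i).
  set s := nth _ _ _ in hA *.
  have hgW : PK W g by have := @C1 W _ hW hg; rewrite subr0.
  apply: C2 => a ha; rewrite inE; move: a ha; rewrite xmonE.
  apply: PKM => a1 a2; rewrite msuppX mem_seq1 => /eqP -> /hgW ha2.
  rewrite suppD supp_mset; apply/negP => hU.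
  have hUW : s :|: supp a2 \notin W.
    by apply: contra ha2 => hw; apply: hW hw (subsetUr _ _).
  move: hA; rewrite !inE => /andP [/negP hcl _]; apply: hcl.
  apply/existsP; exists (s :|: supp a2); rewrite !inE hUW hU /=.
  exact: subsetUl.
Qed.
End Mon.

Theorem lemma4p5 (m : nat) (K W : {set {set 'I_m}}) :
  is_complex K -> is_complex W -> W \subset K ->
  forall f : {mpoly int[m]},
    in_annihilator K W f <-> in_SR_ideal_gen K (W :\: cl (K :\: W)) f.
Proof. exact: main. Qed.
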